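(* Let $\boldsymbol{q}=(q_0,q_1,\ldots,q_n)$ be any instance of a symbolic generalized matrix chain of $n$ matrices and let $m$ be any index such that $q_m=\min_i q_i$. Let $T_{\rm opt}=\min_{A\in\mathcal{A}}T(A,\boldsymbol{q})$ be the optimal cost on $\boldsymbol{q}$. Then there exists a constant $\hat\alpha>0$ (determined by the kernel cost functions, not by the sizes) such that $T(E^m,\boldsymbol{q})<2\hat\alpha\,T_{\rm opt}$.
   Context: A generalized matrix chain (GMC) is a product $\mathrm{op}(M_1)\cdots\mathrm{op}(M_n)$ where $M_i$ has size $q_{i-1}\times q_i$, $\mathrm{op}(M)\in\{M,M^T,M^{-1},M^{-T}\}$, and each $M_i$ carries a structure (general, symmetric, lower-/upper-triangular; non-general structures imply squareness) and a property (singular, invertible, symmetric positive-definite, orthogonal). The shape is fixed and sizes are symbolic. An instance is $\boldsymbol{q}\in\mathbb{N}^{n+1}$ consistent with the shape ($q_{i-1}=q_i$ whenever $M_i$ is necessarily square, i.e. non-general or inverted). Transposition is ignored. Each parenthesization determines exactly one variant: a sequence of $n-1$ associations $(K_i,(a_i,b_i,c_i))$, $0\le a_i<b_i<c_i\le n$, the $i$-th combining via kernel $K_i$ operands of sizes $q_{a_i}\times q_{b_i}$ and $q_{b_i}\times q_{c_i}$. It is built by performing the leftmost available association first and, per association: propagating an inversion to the result when both operands are inverted ($X^{-1}Y^{-1}=(YX)^{-1}$) or when one operand is inverted and general/symmetric while the other is orthogonal or non-singular triangular; assigning the most specialized matrix-product kernel (GEMM, SYMM, TRMM, SYSYMM,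 TRSYMM, TRTRMM) or linear-solve kernel (GEGESV, GESYSV, GETRSV, SYGESV, SYSYSV, SYTRSV, POGESV, POSYSV, POTRSV, TRSM, TRSYSV, TRTRSV; the inverted operand is the coefficient matrix); and inferring the features and sizes of the result by fixed rules. $\mathcal{A}$ is the set of all variants (one per parenthesization). The cost of variant $A$ on $\boldsymbol{q}$ is $T(A,\boldsymbol{q})=\sum_{(K,(a,b,c))\in A}\phi_K(q_a,q_b,q_c)$, where each kernel cost has one of the forms, with positive kernel-specific constants: Type I $\beta abc$; Type IIa $\beta_1a^3+\beta_2a^2c$; Type IIb $\beta_1c^3+\beta_2c^2a$. Type II kernels are exactly the solves with a non-triangular coefficient matrix and general right-hand side (GEGESV: $\beta_1=2/3,\beta_2=2$; SYGESV, POGESV: $\beta_1=1/3,\beta_2=2$), IIa with the coefficient on the left ($a=b$), IIb on the right ($b=c$); all other kernels are Type I. For $h\in\{0,\ldots,n\}$, the fanning-out variant $E^h\in\mathcal{A}$ is the variant of the parenthesization $(M_1(\cdots(M_{h-1}M_h)\cdots))((\cdots(M_{h+1}M_{h+2})\cdots)M_n)$: the prefix $M_1\cdots M_h$ is computed right-to-left, the suffix $M_{h+1}\cdots M_n$ left-to-right, and then the two partial results are associated (for $h\in\{0,n\}$ the whole chain is computed left-to-right, resp. right-to-left). *)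

(* Defs.v *)
From mathcomp Require Import all_boot all_order all_algebra.
Set Implicit Arguments. Unset Strict Implicit. Unset Printing Implicit Defensive.
Import Order.TTheory GRing.Theory Num.Theory.
Local Open Scope ring_scope.

Inductive structure := SGen | SSym | SLow | SUpp.
Inductive property := PSing | PInv | PSPD | POrth.

(* structure, property, and whether the operand appears inverted
   (transposition is ignored). *)
Record feat := Feat { fstruct : structure; fprop : property; finv : bool }.

Definition is_tri (s : structure) : bool :=
  match s with SLow | SUpp => true | _ => false end.
Definition is_gensym (s : structure) : bool :=
  match s with SGen | SSym => true | _ => false end.
Definition is_orth (p : property) : bool :=
  match p with POrth => true | _ => false end.
Definition nonsing (p : property) : bool :=
  match p with PSing => false | _ => true end.

Inductive kname :=
| GEMM | SYMM | TRMM | SYSYMM | TRSYMM | TRTRMM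
| GEGESV | GESYSV | GETRSV | SYGESV | SYSYSV | SYTRSV
| POGESV | POSYSV | POTRSV | TRSM | TRSYSV | TRTRSV.

Definition mulk (s1 s2 : structure) : kname :=
  match s1, s2 with
  | (SLow | SUpp), (SLow | SUpp) => TRTRMM
  | (SLow | SUpp), SSym | SSym, (SLow | SUpp) => TRSYMM
  | SSym, SSym => SYSYMM
  | (SLow | SUpp), SGen | SGen, (SLow | SUpp) => TRMM
  | SSym, SGen | SGen, SSym => SYMM
  | SGen, SGen => GEMM
  end.

Inductive ckind := CGE | CSY | CPO | CTR.   (* coefficient matrix kind *)
Inductive rkind := RGE | RSY | RTR.         (* right-hand side kind *)

Definition coefk (f : feat) : ckind :=
  if is_tri (fstruct f) then CTR else
  match fprop f with
  | PSPD => CPO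
  | _ => match fstruct f with SSym => CSY | _ => CGE end
  end.

Definition rhsk (f : feat) : rkind :=
  match fstruct f with SGen => RGE | SSym => RSY | _ => RTR end.

Definition solvek (c : ckind) (r : rkind) : kname :=
  match c, r with
  | CGE, RGE => GEGESV | CGE, RSY => GESYSV | CGE, RTR => GETRSV
  | CSY, RGE => SYGESV | CSY, RSY => SYSYSV | CSY, RTR => SYTRSV
  | CPO, RGE => POGESV | CPO, RSY => POSYSV | CPO, RTR => POTRSV
  | CTR, RGE => TRSM   | CTR, RSY => TRSYSV | CTR, RTR => TRTRSV
  end.

Definition pstruct (s1 s2 : structure) : structure :=
  match s1, s2 with
  | SLow, SLow => SLow
  | SUpp, SUpp => SUpp
  | _, _ => SGen
  end.
Definition pprop (p1 p2 : property) : property :=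
  if is_orth p1 && is_orth p2 then POrth
  else if nonsing p1 && nonsing p2 then PInv else PSing.

(* the non-inverted operand [o] allows propagating the inversion of the other *)
Definition propagable (o : feat) : bool :=
  is_orth (fprop o) || (is_tri (fstruct o) && nonsing (fprop o)).

(* kernel used when the inversion of [x] (general/symmetric) is propagated
   through the orthogonal or non-singular triangular operand [o]:
   X^-1 Q = (Q^T X)^-1 (multiplication), X^-1 L = (L^-1 X)^-1 (solve with
   triangular coefficient L). *)
Definition prop_kernel (x o : feat) : kname :=
  if is_orth (fprop o) then mulk (fstruct o) (fstruct x)
  else solvek CTR (rhsk x).

(* One association of operands with features x (left) and y (right):
   returns (kernel, coefficient-on-the-left flag, features of the result). *)
Definition combine (x y : feat) : kname * bool * feat :=
  let res b := Feat (pstruct (fstruct x) (fstruct y))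
                    (pprop (fprop x) (fprop y)) b in
  match finv x, finv y with
  | true, true => (mulk (fstruct y) (fstruct x), false, res true)
  | true, false =>
      if is_gensym (fstruct x) && propagable y then (prop_kernel x y, false, res true)
      else (solvek (coefk x) (rhsk y), true, res false)
  | false, true =>
      if is_gensym (fstruct y) && propagable x then (prop_kernel y x, false, res true)
      else (solvek (coefk y) (rhsk x), false, res false)
  | false, false => (mulk (fstruct x) (fstruct y), false, res false)
  end.

Record assoc := Assoc { kn : kname; cleft : bool; ia : nat; ib : nat; ic : nat }.

(* parenthesizations = full binary trees; leaves are the matrices in order *)
Inductive tree := Leaf | Node of tree & tree.

Fixpoint leaves (t : tree) : nat :=
  match t with Leaf => 1%N | Node l r => (leaves l + leaves r)%N end.

(* [build sh t s]: the subchain covered by [t] starts after index [s], i.e.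
   its first matrix is M_{s+1}; returns the features of the result and the
   associations performed (post-order = leftmost available association first). *)
Fixpoint build (sh : nat -> feat) (t : tree) (s : nat) : feat * seq assoc :=
  match t with
  | Leaf => (sh s.+1, [::])
  | Node l r =>
      let b := (s + leaves l)%N in
      let c := (b + leaves r)%N in
      let (fl, al) := build sh l s in
      let (fr, ar) := build sh r b in
      let '(k, cl, f) := combine fl fr in
      (f, al ++ ar ++ [:: Assoc k cl s b c])
  end.

Definition variant (sh : nat -> feat) (t : tree) : seq assoc := (build sh t 0).2.

Fixpoint rcomb (k : nat) : tree :=
  match k with
  | 0 | 1 => Leaf
  | k'.+1 => Node Leaf (rcomb k')
  end.
Fixpoint lcomb (k : nat) : tree :=
  match k with
  | 0 | 1 => Leaf
  | k'.+1 => Node (lcomb k') Leaf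
  end.

(* the fanning-out parenthesization for E^h *)
Definition fan (n h : nat) : tree :=
  if h == 0%N then lcomb n
  else if h == n then rcomb n
  else Node (rcomb h) (lcomb (n - h)).

(* beta : constants of the Type I kernels (the values of beta at the Type II
   kernels GEGESV, SYGESV, POGESV are not used). *)
Definition phi (R : realFieldType) (beta : kname -> R) (q : nat -> nat)
  (x : assoc) : R :=
  let a := (q (ia x))%:R in
  let b := (q (ib x))%:R in
  let c := (q (ic x))%:R in
  let typeII (b1 b2 : R) :=
    if cleft x then b1 * a ^+ 3 + b2 * a ^+ 2 * c
    else b1 * c ^+ 3 + b2 * c ^+ 2 * a in
  match kn x with
  | GEGESV => typeII (2%:R / 3%:R) 2%:R
  | SYGESV | POGESV => typeII (1 / 3%:R) 2%:R
  | K => beta K * a * b * c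
  end.

Definition Tcost (R : realFieldType) (beta : kname -> R) (q : nat -> nat)
  (A : seq assoc) : R := \sum_(x <- A) phi beta q x.

(* M is necessarily square: non-general structure, inverted, or a property
   (invertible / SPD / orthogonal) that only square matrices can have. *)
Definition nec_square (f : feat) : bool :=
  (match fstruct f with SGen => false | _ => true end) || finv f || nonsing (fprop f).

(* q = (q_0,...,q_n) is an instance of the shape (n, sh) (matrices M_1..M_n):
   positive sizes, and q_{i-1} = q_i whenever M_i is necessarily square. *)
Definition instance (n : nat) (sh : nat -> feat) (q : nat -> nat) : Prop :=
  (forall i, (i <= n)%N -> (0 < q i)%N) /\
  (forall i, (1 <= i <= n)%N -> nec_square (sh i) -> q i.-1 = q i).

(* Main.v *)
Require Import Defs.
From mathcomp Require Import all_boot all_order all_algebra.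
From mathcomp Require Import lra ring.
Import Order.TTheory GRing.Theory Num.Theory.
Local Open Scope ring_scope.
Set Implicit Arguments. Unset Strict Implicit.

Definition xc (f : feat) : bool := Defs.finv f && ~~ is_tri (fstruct f).
Definition t2 (k : kname) : bool :=
  match k with GEGESV | SYGESV | POGESV => true | _ => false end.

Lemma comb_facts (x y : feat) :
  let: (k, cl, f) := combine x y in
  [/\ t2 k && cl ==> xc x, t2 k && ~~ cl ==> xc y,
      xc x ==> (t2 k && cl) || (nec_square x && nec_square y),
      xc y ==> (t2 k && ~~ cl) || (nec_square x && nec_square y)
    & nec_square f ==> nec_square x && nec_square y].
Proof.
by case: x y => [[] [] []] [[] [] []].
Qed.

Lemma xc_sq f : xc f -> nec_square f.
Proof. by case: f => [[] [] []]. Qed.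

Definition w (R : realFieldType) (k : kname) : R :=
  if k is GEGESV then 2%:R / 3%:R else 1 / 3%:R.

Lemma phiE (R : realFieldType) (beta : kname -> R) q k cl s b e :
  phi beta q (Assoc k cl s b e) =
  let a := (q s)%:R in let bb := (q b)%:R in let c := (q e)%:R in
  if t2 k then (if cl then w R k * a ^+ 3 + 2%:R * a ^+ 2 * c
                else w R k * c ^+ 3 + 2%:R * c ^+ 2 * a)
  else beta k * a * bb * c.
Proof. by case: k. Qed.

Lemma w_bounds (R : realFieldType) k : 1 / 3%:R <= w R k /\ w R k <= 1.
Proof. case: k => /=; split; lra. Qed.

Lemma node_low (R : realFieldType) (beta : kname -> R) (g : R)
  (hg : 0 < g) (hgb : forall K, g <= beta K) (hg3 : g <= 1 / 3%:R)
  x y k cl f (a b c : R) (ha : 0 < a) (hb : 0 < b) (hc : 0 < c)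
  (sqx : nec_square x -> a = b) (sqy : nec_square y -> b = c)
  (hcomb : combine x y = (k, cl, f)) :
  let P := if t2 k then (if cl then w R k * a ^+ 3 + 2%:R * a ^+ 2 * c
                else w R k * c ^+ 3 + 2%:R * c ^+ 2 * a)
           else beta k * a * b * c in
  [/\ g * (a * b * c) <= P, xc x -> g * a ^+ 3 <= P & xc y -> g * c ^+ 3 <= P].
Proof.
move=> P; rewrite {}/P.
have e3 : forall z : R, z ^+ 3 = z * z * z by move=> z; rewrite !exprS expr0 mulr1 mulrA.
have e2 : forall z : R, z ^+ 2 = z * z by move=> z; rewrite expr2.
rewrite ?e3 ?e2.
have pabc : 0 < a * b * c by rewrite !mulr_gt0.
have paac : 0 < a * a * c by rewrite !mulr_gt0.
have pacc : 0 < a * c * c by rewrite !mulr_gt0.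
have paaa : 0 < a * a * a by rewrite !mulr_gt0.
have pccc : 0 < c * c * c by rewrite !mulr_gt0.
have := comb_facts x y; rewrite hcomb => -[F1 F2 F3 F4 _]; clear hcomb.
have [w1 w2] := w_bounds R k.
have gb := hgb k.
case: (t2 k) F1 F2 F3 F4; case: cl => /= F1 F2 F3 F4.
- have eab : a = b by apply: sqx; apply: xc_sq; exact: F1.
  subst b; split.
  + nra.
  + move=> _; nra.
  + move=> /(implyP F4) /andP [/sqx _ /sqy ebc]; subst c; nra.
- have ebc : b = c by apply: sqy; apply: xc_sq; exact: F2.
  subst b; split.
  + nra.
  + move=> /(implyP F3) /andP [/sqx eab _]; subst a; nra.
  + move=> _; nra.
- split.
  + nra.
  + move=> /(implyP F3) /andP [/sqx eab /sqy ebc]; subst; nra.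
  + move=> /(implyP F4) /andP [/sqx eab /sqy ebc]; subst; nra.
- split.
  + nra.
  + move=> /(implyP F3) /andP [/sqx eab /sqy ebc]; subst; nra.
  + move=> /(implyP F4) /andP [/sqx eab /sqy ebc]; subst; nra.
Qed.

Lemma node_up (R : realFieldType) (beta : kname -> R) (B : R)
  (hB : forall K, beta K <= B) (hB2 : 2%:R <= B)
  x y k cl f (a b c : R) (ha : 0 < a) (hb : 0 < b) (hc : 0 < c)
  (sqx : nec_square x -> a = b) (sqy : nec_square y -> b = c)
  (hcomb : combine x y = (k, cl, f)) :
  let P := if t2 k then (if cl then w R k * a ^+ 3 + 2%:R * a ^+ 2 * c
                else w R k * c ^+ 3 + 2%:R * c ^+ 2 * a)
           else beta k * a * b * c in
  P <= B * (a * b * c + (if xc x then a ^+ 3 else 0) + (if xc y then c ^+ 3 else 0)).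
Proof.
cbv zeta.
have e3 : forall z : R, z ^+ 3 = z * z * z by move=> z; rewrite !exprS expr0 mulr1 mulrA.
have e2 : forall z : R, z ^+ 2 = z * z by move=> z; rewrite expr2.
rewrite ?e3 ?e2.
have pabc : 0 < a * b * c by rewrite !mulr_gt0.
have paac : 0 < a * a * c by rewrite !mulr_gt0.
have pacc : 0 < a * c * c by rewrite !mulr_gt0.
have paaa : 0 < a * a * a by rewrite !mulr_gt0.
have pccc : 0 < c * c * c by rewrite !mulr_gt0.
have := comb_facts x y; rewrite hcomb => -[F1 F2 F3 F4 _]; clear hcomb.
have [w1 w2] := w_bounds R k.
have gb := hB k.
have hx : 0 <= (if xc x then a * a * a else 0) by case: ifP => // _; exact: ltW.
have hy : 0 <= (if xc y then c * c * c else 0) by case: ifP => // _; exact: ltW.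
have hBY : 0 <= B * (if xc y then c * c * c else 0) by apply: mulr_ge0 => //; lra.
have hBX : 0 <= B * (if xc x then a * a * a else 0) by apply: mulr_ge0 => //; lra.
case: (t2 k) F1 F2 F3 F4; case: cl => /= F1 F2 F3 F4.
- have xx : xc x by exact: F1.
  move: hBY hy; set Y := (if xc y then _ else _) => hBY hy.
  have eab : a = b by apply: sqx; apply: xc_sq.
  subst b; rewrite xx; nra.
- have yy : xc y by exact: F2.
  move: hBX hx; set X := (if xc x then _ else _) => hBX hx.
  have ebc : b = c by apply: sqy; apply: xc_sq.
  subst b; rewrite yy; nra.
- move: hBX hx hBY hy; set X := (if xc x then _ else _); set Y := (if xc y then _ else _) => hBX hx hBY hy; nra.
- move: hBX hx hBY hy; set X := (if xc x then _ else _); set Y := (if xc y then _ else _) => hBX hx hBY hy; nra.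
Qed.

Lemma build_Node sh l r s :
  build sh (Node l r) s =
  let b := (s + leaves l)%N in let c := (b + leaves r)%N in
  let kf := combine (build sh l s).1 (build sh r b).1 in
  (kf.2, (build sh l s).2 ++ (build sh r b).2 ++ [:: Assoc kf.1.1 kf.1.2 s b c]).
Proof.
rewrite /=; case: (build sh l s) => fl al; case: (build sh r _) => fr ar.
by case: (combine fl fr) => [[k cl] f].
Qed.

Lemma Tcost_cat (R : realFieldType) (beta : kname -> R) q a1 a2 :
  Tcost beta q (a1 ++ a2) = Tcost beta q a1 + Tcost beta q a2.
Proof. by rewrite /Tcost big_cat. Qed.

Lemma Tcost1 (R : realFieldType) (beta : kname -> R) q x :
  Tcost beta q [:: x] = phi beta q x.
Proof. by rewrite /Tcost big_seq1. Qed.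

Lemma leaves_gt0 t : (0 < leaves t)%N.
Proof. elim: t => //= l IHl r _; exact: ltn_addr. Qed.

Lemma sq_inv n sh q (hi : instance n sh q) t s :
  (s + leaves t <= n)%N -> nec_square (build sh t s).1 -> q s = q (s + leaves t)%N.
Proof.
elim: t s => [|l IHl r IHr] s.
  rewrite /= => hn hsq; rewrite addn1; rewrite addn1 in hn.
  by apply: (proj2 hi) s.+1 _ hsq; rewrite /= hn.
rewrite [leaves _]/= => hn; rewrite build_Node /=.
have := comb_facts (build sh l s).1 (build sh r (s + leaves l)).1.
case: (combine _ _) => [[k cl] f] /= [_ _ _ _ /implyP F5] /F5 /andP [h1 h2].
have hl : (s + leaves l <= n)%N by apply: leq_trans hn; rewrite leq_add2l leq_addr.
have hr : (s + leaves l + leaves r <= n)%N by rewrite -addnA.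
by rewrite (IHl s hl h1) (IHr _ hr h2) addnA.
Qed.

Definition cub (R : realFieldType) sh (q : nat -> nat) j : R :=
  if xc (sh j) then (q j)%:R ^+ 3 else 0.
Definition gt (R : realFieldType) sh (q : nat -> nat) (mu : nat) i : R :=
  mu%:R * (q i)%:R * (q i.+1)%:R + 3%:R * cub R sh q i.+1.
Definition G (R : realFieldType) sh q mu s e : R :=
  \sum_(s <= i < e) gt R sh q mu i.

Lemma G_split (R : realFieldType) sh q mu s b e :
  (s <= b)%N -> (b <= e)%N -> G R sh q mu s e = G R sh q mu s b + G R sh q mu b e.
Proof. by move=> h1 h2; rewrite /G -big_cat_nat. Qed.

Lemma Low (R : realFieldType) (beta : kname -> R) (g : R)
  (hg : 0 < g) (hgb : forall K, g <= beta K) (hg3 : g <= 1 / 3%:R)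
  n sh q (hi : instance n sh q) (mu : nat) (hmu : forall i, (i <= n)%N -> (mu <= q i)%N)
  t s : (s + leaves t <= n)%N ->
  g * (G R sh q mu s (s + leaves t)%N + mu%:R * (q s)%:R * (q (s + leaves t)%N)%:R)
  <= 9%:R * Tcost beta q (build sh t s).2 +
     g * (if t is Leaf then 2%:R * mu%:R * (q s)%:R * (q s.+1)%:R + 3%:R * cub R sh q s.+1
          else 0).
Proof.
have qpos : forall i, (i <= n)%N -> 0 < (q i)%:R :> R.
  by move=> i hin; rewrite ltr0n (proj1 hi).
have muq : forall i, (i <= n)%N -> mu%:R <= (q i)%:R :> R.
  by move=> i hin; rewrite ler_nat hmu.
have mu0 : 0 <= mu%:R :> R by [].
elim: t s => [|l IHl r IHr] s.
  have e1 : (s + leaves Leaf = s.+1)%N by rewrite /= addn1.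
  rewrite e1 => hn.
  rewrite /G big_nat1 /gt /Tcost /= big_nil mulr0 add0r ler_pM2l //; lra.
rewrite [leaves _]/= => hn; rewrite build_Node /=.
set b := (s + leaves l)%N; set e := (b + leaves r)%N.
have hl : (b <= n)%N by apply: leq_trans hn; rewrite leq_add2l leq_addr.
have hr : (e <= n)%N by rewrite /e /b -addnA.
have hsb : (s <= b)%N by rewrite leq_addr.
have hbe : (b <= e)%N by rewrite leq_addr.
rewrite addnA -/b -/e.
have IH1 := IHl s hl; have IH2 := IHr b hr.
rewrite -/b in IH1; rewrite -/e in IH2.
have sqx := sq_inv hi hl; have sqy := sq_inv hi hr.
rewrite -/b in sqx; rewrite -/e in sqy.
move: IH1 IH2 sqx sqy.
case E: (combine (build sh l s).1 (build sh r b).1) => [[k cl] f] /= IH1 IH2 sqx sqy.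
rewrite !Tcost_cat Tcost1 phiE /=.
have := node_low hg hgb hg3 (qpos s (leq_trans hsb hl)) (qpos b hl) (qpos e hr)
  (fun h => congr1 (fun z : nat => z%:R : R) (sqx h))
  (fun h => congr1 (fun z : nat => z%:R : R) (sqy h)) E.
set P := (if t2 k then _ else _).
move=> [N1 N2 N3]; clearbody P.
rewrite (@G_split R sh q mu s b e hsb hbe).
have hs : (s <= n)%N := leq_trans hsb hl.
set a := (q s)%:R : R in IH1 IH2 N1 N2 N3 *.
set bb := (q b)%:R : R in IH1 IH2 N1 N2 N3 *.
set c := (q e)%:R : R in IH1 IH2 N1 N2 N3 *.
set m := mu%:R : R in IH1 IH2 *.
have pa : 0 < a := qpos s hs.
have pb : 0 < bb := qpos b hl.
have pc : 0 < c := qpos e hr.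
have ma : m <= a := muq s hs.
have mb : m <= bb := muq b hl.
have mc : m <= c := muq e hr.
have pabc : 0 < a * bb * c by rewrite !mulr_gt0.
have P0 : 0 < P by apply: lt_le_trans N1; rewrite mulr_gt0.
have hab : 0 < a * bb by rewrite mulr_gt0.
have hbc : 0 < bb * c by rewrite mulr_gt0.
have hac : 0 < a * c by rewrite mulr_gt0.
have m0 : 0 <= m by [].
have h0ab : 0 <= g * (m * a * bb) by rewrite !mulr_ge0 // ltW.
have h0bc : 0 <= g * (m * bb * c) by rewrite !mulr_ge0 // ltW.
have hM1 : g * (m * a * bb) <= P.
  apply: le_trans N1; rewrite ler_pM2l //; nra.
have hM2 : g * (m * bb * c) <= P.
  apply: le_trans N1; rewrite ler_pM2l //; nra.
have hM3 : g * (m * a * c) <= P.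
  apply: le_trans N1; rewrite ler_pM2l //; nra.
have hL : g * (if l is Leaf then 2%:R * m * a * (q s.+1)%:R + 3%:R * cub R sh q s.+1 else 0)
          <= g * (m * a * bb) + 4%:R * P.
  move: sqx N2; case El: l => [|l1 l2] sqx N2; last by rewrite mulr0; lra.
  have eb : b = s.+1 by rewrite /b El /= addn1.
  have qb : cub R sh q s.+1 = cub R sh q b by rewrite eb.
  have qb' : (q s.+1)%:R = bb :> R by rewrite /bb eb.
  rewrite qb qb' /cub.
  move: sqx N2; rewrite /= -eb => sqx N2.
  case X: (xc (sh b)).
    have eab : a = bb by rewrite /a (sqx (xc_sq X)).
    have := N2 X; rewrite eab => N2'; nra.
  nra.
have hR : g * (if r is Leaf then 2%:R * m * bb * (q b.+1)%:R + 3%:R * cub R sh q b.+1 else 0)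
          <= g * (m * bb * c) + 4%:R * P.
  move: sqy N3; case Er: r => [|r1 r2] sqy N3; last by rewrite mulr0; lra.
  have ee : e = b.+1 by rewrite /e Er /= addn1.
  have qc : cub R sh q b.+1 = cub R sh q e by rewrite ee.
  have qc' : (q b.+1)%:R = c :> R by rewrite /c ee.
  rewrite qc qc' /cub.
  move: sqy N3; rewrite /= -ee => sqy N3.
  case X: (xc (sh e)).
    have ebc : c = bb by rewrite /c -(sqy (xc_sq X)).
    have := N3 X; rewrite ebc => N3'; nra.
  nra.
rewrite mulr0 addr0.
move: IH1 IH2 hL hR.
move=> IH1 IH2 hL hR; rewrite !mulrDr in IH1 IH2 *.
move: hL IH1 hR IH2.
set L1 := (match l with Leaf => _ | Node _ _ => _ end).
set L2 := (match r with Leaf => _ | Node _ _ => _ end).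
set T1 := Tcost _ _ _. set T2 := Tcost _ _ _.
set G1 := G _ _ _ _ _ _. set G2 := G _ _ _ _ _ _.
move=> hL IH1 hR IH2.
lra.
Qed.

Lemma leaves_rcomb k : leaves (rcomb k.+1) = k.+1.
Proof. elim: k => // k IH; rewrite [rcomb _]/= [leaves _]/= IH add1n. by []. Qed.
Lemma leaves_lcomb k : leaves (lcomb k.+1) = k.+1.
Proof. elim: k => // k IH; rewrite [lcomb _]/= [leaves _]/= IH addn1. by []. Qed.

Lemma G_ge0 (R : realFieldType) sh q mu s e : 0 <= G R sh q mu s e.
Proof.
rewrite /G; apply: sumr_ge0 => i _; rewrite /gt /cub.
apply: addr_ge0; first by rewrite !mulr_ge0.
by apply: mulr_ge0 => //; case: ifP => // _; rewrite exprn_ge0.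
Qed.

Lemma Up_r (R : realFieldType) (beta : kname -> R) (B : R)
  (hB : forall K, beta K <= B) (hB2 : 2%:R <= B)
  n sh q (hi : instance n sh q) (mu : nat) (hmu : forall i, (i <= n)%N -> (mu <= q i)%N)
  k s : (s + k.+1 <= n)%N -> q (s + k.+1)%N = mu ->
  Tcost beta q (build sh (rcomb k.+1) s).2 <= 2%:R * B * G R sh q mu s (s + k.+1)%N.
Proof.
have qpos : forall i, (i <= n)%N -> 0 < (q i)%:R :> R.
  by move=> i hin; rewrite ltr0n (proj1 hi).
have muq : forall i, (i <= n)%N -> mu%:R <= (q i)%:R :> R.
  by move=> i hin; rewrite ler_nat hmu.
have B0 : 0 <= B by lra.
elim: k s => [|k IH] s hn hq.
  by rewrite /Tcost /= big_nil; rewrite !mulr_ge0 // ?G_ge0 //; lra.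
have -> : rcomb k.+2 = Node Leaf (rcomb k.+1) by [].
rewrite build_Node /= leaves_rcomb addn1.
have ee : (s.+1 + k.+1 = s + k.+2)%N by rewrite addSnnS.
rewrite ee.
have hs1 : (s.+1 + k.+1 <= n)%N by rewrite ee.
have IH1 := IH s.+1 hs1; rewrite ee in IH1; have := IH1 hq => {}IH1.
have hs1' : (s.+1 + leaves (rcomb k.+1) <= n)%N by rewrite leaves_rcomb.
have sqy := sq_inv hi hs1'; rewrite leaves_rcomb ee in sqy.
have hb : (s.+1 <= n)%N by apply: leq_trans hn; rewrite -addn1 leq_add2l.
have hs : (s <= n)%N by apply: ltnW.
have sqx : nec_square (sh s.+1) -> q s = q s.+1.
  by move=> h; apply: (proj2 hi) s.+1 _ h; rewrite /= hb.
move: sqy.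
case E: (combine (sh s.+1) (build sh (rcomb k.+1) s.+1).1) => [[k' cl] f] /= sqy.
rewrite !Tcost_cat Tcost1 phiE.
rewrite -/(rcomb k.+1); cbv zeta.
idtac.
have := node_up hB hB2 (qpos s hs) (qpos s.+1 hb) (qpos _ hn)
  (fun h => congr1 (fun z : nat => z%:R : R) (sqx h))
  (fun h => congr1 (fun z : nat => z%:R : R) (sqy h)) E.
move=> hP; cbv zeta in hP; rewrite -/(rcomb k.+1) in hP.
set P := (if t2 k' then _ else _) in hP *; clearbody P.
rewrite /G big_ltn; last by rewrite -addn1 leq_add2l.
rewrite -/(G R sh q mu s.+1 (s + k.+2)) mulrDr.
suff : P <= 2%:R * B * gt R sh q mu s by move: IH1; rewrite -/(Tcost beta q _); lra.
apply: (le_trans hP).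
rewrite /gt /cub.
have pa := qpos s hs; have pb := qpos s.+1 hb; have pc := qpos _ hn.
have ma := muq s hs; have mb := muq s.+1 hb.
move: sqx sqy pa pb pc ma mb; rewrite hq.
set a := (q s)%:R : R; set bb := (q s.+1)%:R : R; set m := mu%:R : R.
move=> sqx sqy pa pb pc ma mb.
have hab : 0 < a * bb by rewrite mulr_gt0.
have e3 : forall z : R, z ^+ 3 = z * z * z by move=> z; rewrite !exprS expr0 mulr1 mulrA.
rewrite !e3.
have HY : (if xc (build sh (rcomb k.+1) s.+1).1 then m * m * m else 0) <= a * bb * m.
  case: ifP => X; last by rewrite !mulr_ge0 // ltW.
  have ebm : bb = m by rewrite /bb /m (sqy (xc_sq X)).
  rewrite ebm; have m0 : 0 < m by rewrite -ebm.
  by rewrite ler_pM2r // ler_pM2r.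
have HX : (if xc (sh s.+1) then a * a * a else 0) = (if xc (sh s.+1) then bb * bb * bb else 0).
  by case: ifP => // X; rewrite /a /bb (sqx (xc_sq X)).
rewrite HX.
move: HY; set Y := (if xc _ then m * m * m else 0).
set X := (if xc _ then bb * bb * bb else 0).
have X0 : 0 <= X by rewrite /X; case: ifP => // _; rewrite !mulr_ge0 // ltW.
move=> HY.
have hm : m * a * bb = a * bb * m by rewrite -mulrA mulrC.
rewrite hm.
nra.
Qed.

Lemma Up_l (R : realFieldType) (beta : kname -> R) (B : R)
  (hB : forall K, beta K <= B) (hB2 : 2%:R <= B)
  n sh q (hi : instance n sh q) (mu : nat) (hmu : forall i, (i <= n)%N -> (mu <= q i)%N)
  k s : (s + k.+1 <= n)%N -> q s = mu ->
  Tcost beta q (build sh (lcomb k.+1) s).2 <= 2%:R * B * G R sh q mu s (s + k.+1)%N.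
Proof.
have qpos : forall i, (i <= n)%N -> 0 < (q i)%:R :> R.
  by move=> i hin; rewrite ltr0n (proj1 hi).
have muq : forall i, (i <= n)%N -> mu%:R <= (q i)%:R :> R.
  by move=> i hin; rewrite ler_nat hmu.
have B0 : 0 <= B by lra.
move=> + hq; elim: k => [|k IH] hn.
  by rewrite /Tcost /= big_nil; rewrite !mulr_ge0 // ?G_ge0 //; lra.
have -> : lcomb k.+2 = Node (lcomb k.+1) Leaf by [].
rewrite build_Node /= -/(lcomb k.+1) leaves_lcomb addn1.
rewrite addnS in hn *.
set b := (s + k.+1)%N in hn *.
have hb : (b <= n)%N by apply: ltnW.
have IH1 := IH hb.
have hs0 : (s + leaves (lcomb k.+1) <= n)%N by rewrite leaves_lcomb.
have sqx := sq_inv hi hs0; rewrite leaves_lcomb -/b in sqx.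
have hs : (s <= n)%N by apply: leq_trans hb; rewrite leq_addr.
have sqy : nec_square (sh b.+1) -> q b = q b.+1.
  by move=> h; apply: (proj2 hi) b.+1 _ h; rewrite /= hn.
move: sqx.
case E: (combine (build sh (lcomb k.+1) s).1 (sh b.+1)) => [[k' cl] f] /= sqx.
rewrite !Tcost_cat Tcost1 phiE.
have := node_up hB hB2 (qpos s hs) (qpos b hb) (qpos _ hn)
  (fun h => congr1 (fun z : nat => z%:R : R) (sqx h))
  (fun h => congr1 (fun z : nat => z%:R : R) (sqy h)) E.
move=> hP; cbv zeta in hP; cbv zeta.
set P := (if t2 k' then _ else _) in hP *; clearbody P.
rewrite /G big_nat_recr /=; last by rewrite leq_addr.
rewrite -/(G R sh q mu s b) mulrDr.
suff : P <= 2%:R * B * gt R sh q mu b by move: IH1; lra.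
apply: (le_trans hP).
rewrite /gt /cub.
have pa := qpos s hs; have pb := qpos b hb; have pc := qpos _ hn.
have mb := muq b hb; have mc := muq b.+1 hn.
move: sqx sqy pa pb pc mb mc; rewrite hq.
set c := (q b.+1)%:R : R; set bb := (q b)%:R : R; set m := mu%:R : R.
move=> sqx sqy pa pb pc mb mc.
have hbc : 0 < bb * c by rewrite mulr_gt0.
have e3 : forall z : R, z ^+ 3 = z * z * z by move=> z; rewrite !exprS expr0 mulr1 mulrA.
rewrite !e3.
have HX : (if xc (build sh (lcomb k.+1) s).1 then m * m * m else 0) <= m * bb * c.
  case: ifP => X; last by rewrite !mulr_ge0 // ltW.
  have ebm : bb = m by rewrite /bb /m -(sqx (xc_sq X)).
  rewrite ebm; have m0 : 0 < m by rewrite -ebm.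
  by rewrite ler_pM2l ?mulr_gt0.
move: HX; set X := (if xc _ then m * m * m else 0).
set Y := (if xc _ then c * c * c else 0).
have Y0 : 0 <= Y by rewrite /Y; case: ifP => // _; rewrite !mulr_ge0 // ltW.
move=> HX.
nra.
Qed.

Lemma Up_fan (R : realFieldType) (beta : kname -> R) (B : R)
  (hB : forall K, beta K <= B) (hB2 : 2%:R <= B)
  n sh q (hi : instance n sh q) (m : nat) (hm : (m <= n)%N)
  (hmu : forall i, (i <= n)%N -> (q m <= q i)%N) (hn : (2 <= n)%N) :
  Tcost beta q (variant sh (fan n m)) <=
  3%:R * B * (G R sh q (q m) 0 n + (q m)%:R * (q 0%N)%:R * (q n)%:R).
Proof.
have qpos : forall i, (i <= n)%N -> 0 < (q i)%:R :> R.
  by move=> i hin; rewrite ltr0n (proj1 hi).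
have muq : forall i, (i <= n)%N -> (q m)%:R <= (q i)%:R :> R.
  by move=> i hin; rewrite ler_nat hmu.
have B0 : 0 <= B by lra.
have G0 := G_ge0 R sh q (q m) 0 n.
have pa := qpos 0%N isT; have pc := qpos n (leqnn n); have pm := qpos m hm.
have hac : 0 <= (q m)%:R * (q 0%N)%:R * (q n)%:R :> R by rewrite !mulr_ge0 // ltW.
case: n hn hi qpos muq hm hmu G0 pc hac => [|n'] // hn hi qpos muq hm hmu G0 pc hac.
rewrite /variant /fan.
case: eqP => [m0|mn0].
  have := Up_l hB hB2 hi hmu (k:=n') (s:=0%N) _ _.
  rewrite add0n => /(_ (leqnn _)) /(_ (congr1 q (esym m0))) H.
  apply: (le_trans H); nra.
case: eqP => [mn|mnn].
  have := Up_r hB hB2 hi hmu (k:=n') (s:=0%N) _ _.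
  rewrite add0n => /(_ (leqnn _)) /(_ (congr1 q (esym mn))) H.
  apply: (le_trans H); nra.
set N := n'.+1 in hn hi qpos muq hm hmu G0 pc hac mnn *.
case: m mn0 mnn hm hmu muq pm hac G0 => [|m'] // _ mnn hm hmu muq pm hac G0.
have hlt : (m'.+1 < N)%N by rewrite ltn_neqAle hm andbT; apply/eqP.
have [k' hk] : exists k', (N - m'.+1)%N = k'.+1.
  by exists (N - m'.+1).-1; rewrite prednK // subn_gt0.
rewrite hk build_Node /= -/(rcomb m'.+1) -/(lcomb k'.+1) leaves_rcomb leaves_lcomb.
have eN : (m'.+1 + k'.+1)%N = N by rewrite -hk subnKC // ltnW.
rewrite eN.
have H1 := Up_r hB hB2 hi hmu (k:=m') (s:=0%N); rewrite add0n in H1.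
have {H1}H1 := H1 hm erefl.
have H2 := Up_l hB hB2 hi hmu (k:=k') (s:=m'.+1); rewrite eN in H2.
have {H2}H2 := H2 (leqnn _) erefl.
have hs0 : (0 + leaves (rcomb m'.+1) <= N)%N by rewrite leaves_rcomb.
have sqx := sq_inv hi hs0; rewrite leaves_rcomb add0n in sqx.
have hs1 : (m'.+1 + leaves (lcomb k'.+1) <= N)%N by rewrite leaves_lcomb eN.
have sqy := sq_inv hi hs1; rewrite leaves_lcomb eN in sqy.
move: sqx sqy.
case E: (combine (build sh (rcomb m'.+1) 0).1 (build sh (lcomb k'.+1) m'.+1).1)
  => [[k0 cl] f] /= sqx sqy.
rewrite !Tcost_cat Tcost1 phiE.
have := node_up hB hB2 pa pm pc
  (fun h => congr1 (fun z : nat => z%:R : R) (sqx h))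
  (fun h => congr1 (fun z : nat => z%:R : R) (sqy h)) E.
move=> hP; cbv zeta in hP; cbv zeta.
set P := (if t2 k0 then _ else _) in hP *; clearbody P.
rewrite (@G_split R sh q (q m'.+1) 0 m'.+1 N) //.
suff : P <= 3%:R * B * ((q m'.+1)%:R * (q 0%N)%:R * (q N)%:R).
  move: H1 H2 (G_ge0 R sh q (q m'.+1) 0 m'.+1) (G_ge0 R sh q (q m'.+1) m'.+1 N).
  set G1 := G _ _ _ _ _ _; set G2 := G _ _ _ _ _ _.
  set T1 := Tcost _ _ _; set T2 := Tcost _ _ _.
  move=> H1 H2 g1 g2 HP.
  have := mulr_ge0 B0 g1; have := mulr_ge0 B0 g2; nra.
apply: (le_trans hP).
have e3 : forall z : R, z ^+ 3 = z * z * z by move=> z; rewrite !exprS expr0 mulr1 mulrA.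
rewrite !e3.
move: sqx sqy pa pc pm (muq 0%N isT) (muq N (leqnn N)).
set a := (q 0%N)%:R : R; set c := (q N)%:R : R; set mm := (q m'.+1)%:R : R.
move=> sqx sqy pa pc pm ma mc.
have HX : (if xc (build sh (rcomb m'.+1) 0).1 then a * a * a else 0) <= a * mm * c.
  case: ifP => X; last by rewrite !mulr_ge0 // ltW.
  have ebm : a = mm by rewrite /a /mm (sqx (xc_sq X)).
  rewrite -ebm; have m0 : 0 < a by [].
  by rewrite ler_pM2l ?mulr_gt0 // ebm.
have HY : (if xc (build sh (lcomb k'.+1) m'.+1).1 then c * c * c else 0) <= a * mm * c.
  case: ifP => X; last by rewrite !mulr_ge0 // ltW.
  have ebm : c = mm by rewrite /c /mm (sqy (xc_sq X)).
  rewrite -ebm -!mulrA ler_pM2r ?mulr_gt0 //.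
  by rewrite ebm.
move: HX HY; set X := (if xc _ then a * a * a else 0).
set Y := (if xc _ then c * c * c else 0).
move=> HX HY.
have hm2 : mm * a * c = a * mm * c by rewrite [mm * a]mulrC.
rewrite hm2.
have := mulr_ge0 B0 (ltW (mulr_gt0 (mulr_gt0 pa pm) pc)).
nra.
Qed.

Unset Implicit Arguments.

Theorem lemma2 (R : realFieldType) (beta : kname -> R)
  (hbeta : forall K, 0 < beta K) :
  exists alpha : R, 0 < alpha /\
    forall (n : nat) (sh : nat -> feat) (q : nat -> nat),
      (2 <= n)%N -> instance n sh q ->
      forall m : nat, (m <= n)%N -> (forall i, (i <= n)%N -> (q m <= q i)%N) ->
      forall t : tree, leaves t = n ->
        Tcost beta q (variant sh (fan n m)) < 2%:R * alpha * Tcost beta q (variant sh t).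
Proof.
pose Bv : R := 2%:R + (beta GEMM + beta SYMM + beta TRMM + beta SYSYMM + beta TRSYMM
  + beta TRTRMM + beta GEGESV + beta GESYSV + beta GETRSV + beta SYGESV + beta SYSYSV
  + beta SYTRSV + beta POGESV + beta POSYSV + beta POTRSV + beta TRSM + beta TRSYSV
  + beta TRTRSV).
pose gv : R := Num.min (1 / 3%:R) (Num.min (beta GEMM) (Num.min (beta SYMM)
  (Num.min (beta TRMM) (Num.min (beta SYSYMM) (Num.min (beta TRSYMM)
  (Num.min (beta TRTRMM) (Num.min (beta GEGESV) (Num.min (beta GESYSV)
  (Num.min (beta GETRSV) (Num.min (beta SYGESV) (Num.min (beta SYSYSV)
  (Num.min (beta SYTRSV) (Num.min (beta POGESV) (Num.min (beta POSYSV)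
  (Num.min (beta POTRSV) (Num.min (beta TRSM) (Num.min (beta TRSYSV)
  (beta TRTRSV)))))))))))))))))).
have hp := hbeta.
have h0 := hp GEMM; have h1 := hp SYMM; have h2 := hp TRMM; have h3 := hp SYSYMM; have h4 := hp TRSYMM; have h5 := hp TRTRMM; have h6 := hp GEGESV; have h7 := hp GESYSV; have h8 := hp GETRSV; have h9 := hp SYGESV; have h10 := hp SYSYSV; have h11 := hp SYTRSV; have h12 := hp POGESV; have h13 := hp POSYSV; have h14 := hp POTRSV; have h15 := hp TRSM; have h16 := hp TRSYSV; have h17 := hp TRTRSV.
have hB : forall K, beta K <= Bv by case; rewrite /Bv; lra.
have hB2 : 2%:R <= Bv.
  rewrite /Bv; lra.
have hg0 : 0 < gv by rewrite /gv !lt_min !hp andbT; lra.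
have hg3 : gv <= 1 / 3%:R by rewrite /gv ge_min lexx.
have hgb : forall K, gv <= beta K.
  by case; rewrite /gv !ge_min lexx ?orbT.
have hB0 : 0 < Bv by lra.
exists (27%:R * Bv / gv); split.
  by rewrite divr_gt0 // mulr_gt0.
move=> n sh q hn hi m hm hmin t ht.
have hmu : forall i, (i <= n)%N -> (q m <= q i)%N := hmin.
have hs : (0 + leaves t <= n)%N by rewrite add0n ht.
have L := Low hg0 hgb hg3 hi hmu hs.
rewrite add0n ht in L.
have tN : (if t is Leaf then 2%:R * (q m)%:R * (q 0%N)%:R * (q 1%N)%:R + 3%:R * cub R sh q 1%N
          else 0) = 0 :> R.
  by case: t ht L {hs} => //= ht; rewrite -ht in hn.
rewrite tN mulr0 addr0 in L.
have U := Up_fan hB hB2 hi hm hmin hn.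
rewrite /variant.
move: L U.
set S := (G R sh q (q m) 0 n + _).
set T := Tcost _ _ (build sh t 0).2.
set TE := Tcost _ _ _.
move=> L U.
have pS : 0 < S.
  rewrite /S; apply: ltr_wpDl; first exact: G_ge0.
  by rewrite !mulr_gt0 // ltr0n (proj1 hi).
have pT : 0 < T by have := mulr_gt0 hg0 pS; lra.
have gi : gv / gv = 1 by rewrite divff // gt_eqF.
have hS : S <= 9%:R * T / gv.
  by rewrite ler_pdivlMr // mulrC.
have : TE <= 27%:R * Bv / gv * T.
  apply: (le_trans U).
  have -> : 27%:R * Bv / gv * T = 3%:R * Bv * (9%:R * T / gv).
    by ring.
  by rewrite ler_pM2l // mulr_gt0.
have pa : 0 < 27%:R * Bv / gv * T by rewrite !mulr_gt0 // invr_gt0.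
lra.
Qed.
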